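(* Let $\mathfrak C$ be a monster model of a complete theory $T$. Let $p(\bar x)\in S(\emptyset)$ with $\bar x$ short, $q\in S_p(\mathfrak C)$, $M\prec\mathfrak C$ a small model, and $\bar\alpha$ a tuple in $\mathfrak C$ realizing $q|_M$. Let $B:=A_{q|_{\bar\alpha},\bar\alpha}=\{\sigma\in\mathrm{Aut}(\mathfrak C):\sigma(\bar\alpha)\models q|_{\bar\alpha}\}$. Then $B\,B\,B^{-1}B^{-1}\bar\alpha:=\{\sigma(\bar\alpha):\sigma\in BBB^{-1}B^{-1}\}\subseteq\{\bar\beta\subseteq\mathfrak C:d_L(\bar\alpha,\bar\beta)\le 4\}\subseteq[\bar\alpha]_{E_L}$.
   Context: $\mathfrak C$ is $\kappa$-saturated and strongly $\kappa$-homogeneous ($\kappa$ large); small/short means of size $<\kappa$. $S_p(\mathfrak C)=\{q\in S_{\bar x}(\mathfrak C):p\subseteq q\}$; $q|_M$ and $q|_{\bar\alpha}$ denote the restrictions of $q$ to types over $M$ and over (the set enumerated by) $\bar\alpha$. The Lascar distance $d_L(\bar\alpha,\bar\beta)$ is the least $n$ such that there are $\bar\alpha_0=\bar\alpha,\dots,\bar\alpha_n=\bar\beta$ and small models $M_0,\dots,M_{n-1}$ with $\bar\alpha_i\equiv_{M_i}\bar\alpha_{i+1}$; $E_L$ is the Lascar strong type relation, i.e. the orbit equivalence relation of the group generated by automorphisms fixing pointwise some small submodel, and $[\bar\alpha]_{E_L}$ is the class of $\bar\alpha$. *)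

(* Defs.v *)
From Stdlib Require Import List Fin.
Set Implicit Arguments.
Unset Strict Implicit.

Record language := {
  Fun : Type; fun_ar : Fun -> nat;
  Rel : Type; rel_ar : Rel -> nat }.

Record structure (L : language) := {
  carrier :> Type;
  ifun : forall f : Fun L, (Fin.t (fun_ar f) -> carrier) -> carrier;
  irel : forall r : Rel L, (Fin.t (rel_ar r) -> carrier) -> Prop }.
Arguments ifun {L} s f _.
Arguments irel {L} s r _.

Inductive term (L : language) : Type :=
  | tvar : nat -> term L
  | tapp : forall f : Fun L, (Fin.t (fun_ar f) -> term L) -> term L.

Inductive formula (L : language) : Type :=
  | feq : term L -> term L -> formula L
  | frel : forall r : Rel L, (Fin.t (rel_ar r) -> term L) -> formula L
  | fneg : formula L -> formula L
  | fand : formula L -> formula L -> formula L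
  | fex : nat -> formula L -> formula L.

Fixpoint fv_term L (t : term L) (n : nat) : Prop :=
  match t with
  | tvar _ k => k = n
  | @tapp _ f ts => exists i, fv_term (ts i) n
  end.

Fixpoint fv L (phi : formula L) (n : nat) : Prop :=
  match phi with
  | @feq _ t u => fv_term t n \/ fv_term u n
  | @frel _ r ts => exists i, fv_term (ts i) n
  | @fneg _ p => fv p n
  | @fand _ p q => fv p n \/ fv q n
  | @fex _ k p => k <> n /\ fv p n
  end.

Fixpoint eval L (M : structure L) (v : nat -> M) (t : term L) : M :=
  match t with
  | tvar _ k => v k
  | @tapp _ f ts => ifun M f (fun i => eval v (ts i))
  end.

Definition upd {X : Type} (v : nat -> X) (n : nat) (x : X) : nat -> X :=
  fun k => if Nat.eqb k n then x else v k.

Fixpoint sat L (M : structure L) (v : nat -> M) (phi : formula L) : Prop :=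
  match phi with
  | @feq _ t u => eval v t = eval v u
  | @frel _ r ts => irel M r (fun i => eval v (ts i))
  | @fneg _ p => ~ sat v p
  | @fand _ p q => sat v p /\ sat v q
  | @fex _ k p => exists m : M, sat (upd v k m) p
  end.

(* ---------- smallness: |X| < kappa, kappa represented by a type K ---------- *)
Definition small (K X : Type) : Prop :=
  ~ (exists f : K -> X, forall a b, f a = f b -> a = b).

Definition subset_small (K : Type) {X : Type} (A : X -> Prop) : Prop :=
  small K {x : X | A x}.

(* ---------- formulas with parameters, in variables indexed by I ----------
   A formula phi(xbar, cbar) is a pair (phi, s) where s says, for each
   variable number n, whether it stands for the coordinate x_i (inl i)
   or for the parameter c (inr c). *)
Definition pformula L (I : Type) (C : structure L) : Type :=
  (formula L * (nat -> I + carrier C))%type.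

Definition valuation L I (C : structure L) (b : I -> C) (s : nat -> I + carrier C)
  : nat -> C :=
  fun n => match s n with inl i => b i | inr c => c end.

Definition psat L I (C : structure L) (b : I -> C) (x : pformula I C) : Prop :=
  sat (valuation b (snd x)) (fst x).

Definition over L I (C : structure L) (A : C -> Prop) (x : pformula I C) : Prop :=
  forall n c, fv (fst x) n -> snd x n = inr c -> A c.

Definition realizes L I (C : structure L) (b : I -> C) (Sigma : pformula I C -> Prop) :=
  forall x, Sigma x -> psat b x.

Definition fin_sat L I (C : structure L) (Sigma : pformula I C -> Prop) : Prop :=
  forall l : list (pformula I C), (forall x, In x l -> Sigma x) ->
  exists b : I -> C, forall x, In x l -> psat b x.

Definition complete_type L I (C : structure L) (A : C -> Prop)
    (q : pformula I C -> Prop) : Prop :=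
  (forall x, q x -> over A x) /\ fin_sat q /\
  (forall phi s, over A (phi, s) -> q (phi, s) \/ q (fneg phi, s)).

Definition restrict L I (C : structure L) (q : pformula I C -> Prop) (A : C -> Prop)
  : pformula I C -> Prop := fun x => q x /\ over A x.

Definition range {I X : Type} (a : I -> X) : X -> Prop := fun c => exists i, a i = c.

Definition equiv_over L I (C : structure L) (A : C -> Prop) (a b : I -> C) : Prop :=
  forall x : pformula I C, over A x -> (psat a x <-> psat b x).

Definition fclosed L (C : structure L) (D : C -> Prop) : Prop :=
  forall f (args : Fin.t (fun_ar f) -> C), (forall i, D (args i)) -> D (ifun C f args).

Definition substr L (C : structure L) (D : C -> Prop) (H : fclosed D) : structure L :=
  {| carrier := {x : C | D x};
     ifun := fun f args =>
       exist _ (ifun C f (fun i => proj1_sig (args i)))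
               (H f _ (fun i => proj2_sig (args i)));
     irel := fun r args => irel C r (fun i => proj1_sig (args i)) |}.

Definition elem_sub L (C : structure L) (D : C -> Prop) : Prop :=
  (exists x, D x) /\
  exists H : fclosed D,
    forall (phi : formula L) (v : nat -> substr H),
      sat v phi <-> sat (fun n => proj1_sig (v n)) phi.

Definition small_model L (K : Type) (C : structure L) (D : C -> Prop) : Prop :=
  subset_small K D /\ elem_sub D.

Definition automorphism L (C : structure L) (g : C -> C) : Prop :=
  (forall a b, g a = g b -> a = b) /\ (forall b, exists a, g a = b) /\
  (forall f args, g (ifun C f args) = ifun C f (fun i => g (args i))) /\
  (forall r args, irel C r args <-> irel C r (fun i => g (args i))).
Arguments automorphism {L} C g.

Definition kappa_saturated L (K : Type) (C : structure L) : Prop :=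
  forall (A : C -> Prop), subset_small K A ->
  forall Sigma : pformula unit C -> Prop,
    (forall x, Sigma x -> over A x) -> fin_sat Sigma ->
    exists b : unit -> C, realizes b Sigma.

Definition strongly_homogeneous L (K : Type) (C : structure L) : Prop :=
  forall (J : Type), small K J -> forall a b : J -> C,
    equiv_over (fun _ => False) a b ->
    exists g, automorphism C g /\ forall j, g (a j) = b j.

(* kappa "large": kappa infinite and bigger than the language *)
Definition kappa_large L (K : Type) : Prop :=
  (exists e : nat -> K, forall m n, e m = e n -> m = n) /\
  small K (Fun L) /\ small K (Rel L).

Definition lascar_chain L (K I : Type) (C : structure L) (m : nat) (alpha beta : I -> C)
  : Prop :=
  exists (a : nat -> I -> C) (Ms : nat -> C -> Prop),
    a 0 = alpha /\ a m = beta /\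
    forall k, k < m -> small_model K (Ms k) /\ equiv_over (Ms k) (a k) (a (S k)).

Definition dL_le L (K I : Type) (C : structure L) (alpha beta : I -> C) (n : nat) : Prop :=
  exists m, m <= n /\ lascar_chain K m alpha beta.

Definition fixes_small_model L (K : Type) (C : structure L) (g : C -> C) : Prop :=
  automorphism C g /\ exists M, small_model K M /\ forall c, M c -> g c = c.

(* Autf_L(C): the group generated by those (closed under inverses, so finite
   compositions suffice, but we close under inverses explicitly anyway) *)
Inductive autfL L (K : Type) (C : structure L) : (C -> C) -> Prop :=
  | autfL_id : autfL K (fun x => x)
  | autfL_gen : forall g, fixes_small_model K g -> autfL K g
  | autfL_comp : forall g h, autfL K g -> autfL K h -> autfL K (fun x => g (h x))
  | autfL_inv : forall g h, autfL K g -> (forall x, h (g x) = x) ->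
                (forall x, g (h x) = x) -> autfL K h.

Definition EL L (K I : Type) (C : structure L) (alpha beta : I -> C) : Prop :=
  exists g, autfL K g /\ forall i, g (alpha i) = beta i.

Definition Aset L I (C : structure L) (q : pformula I C -> Prop) (alpha : I -> C)
  : (C -> C) -> Prop :=
  fun g => automorphism C g /\ realizes (fun i => g (alpha i)) (restrict q (range alpha)).

(* Main.v *)
Require Import Defs.
From Stdlib Require Import List Arith Lia Classical ClassicalEpsilon FunctionalExtensionality PropExtensionality.
From mathcomp Require classical_sets.
Unset Asymmetric Patterns.

Lemma zorn_sets (T : Type) (P : (T -> Prop) -> Prop) :
  (forall F : (T -> Prop) -> Prop, (forall X, F X -> P X) ->
     (forall X Y, F X -> F Y -> (forall t, X t -> Y t) \/ (forall t, Y t -> X t)) ->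
     P (fun t => exists X, F X /\ X t)) ->
  exists A, P A /\ forall B, (forall t, A t -> B t) -> P B -> forall t, B t -> A t.
Proof.
  intros H.
  destruct (@classical_sets.Zorn_bigcup T P) as [A [PA HA]].
  - intros F FP Ftot. specialize (H F FP Ftot).
    assert (E : classical_sets.bigcup F (fun X => X) = (fun t => exists X, F X /\ X t)).
    { apply functional_extensionality; intro t; apply propositional_extensionality.
      split; [intros [X H1 H2]; exists X; auto | intros [X [H1 H2]]; exists X; auto]. }
    rewrite E; exact H.
  - exists A; split; auto.
    intros B AB PB t Bt. apply NNPP; intro nA.
    apply (HA B); auto. split.
    + intros x Ax; apply AB; exact Ax.
    + intro BA. apply nA. apply BA. exact Bt.
Qed.

Set Implicit Arguments.

Definition inj (X Y : Type) := exists f : X -> Y, forall a b, f a = f b -> a = b.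

Lemma inj_trans X Y Z : inj X Y -> inj Y Z -> inj X Z.
Proof. intros [f Hf] [g Hg]; exists (fun x => g (f x)); auto. Qed.

Lemma inj_refl X : inj X X.
Proof. exists (fun x => x); auto. Qed.

Lemma small_inj K X Y : inj X Y -> small K Y -> small K X.
Proof. intros H HY HX. apply HY. apply (inj_trans HX H). Qed.

Definition fromsum {B} (x : B + B) : B := match x with inl b => b | inr b => b end.

Lemma inj_sum A A' B B' : inj A A' -> inj B B' -> inj (A + B) (A' + B').
Proof.
  intros [f Hf] [g Hg].
  exists (fun x => match x with inl a => inl (f a) | inr b => inr (g b) end).
  intros [a|b] [a'|b'] E; try discriminate; injection E; intro E'; f_equal; auto.
Qed.

Lemma comparable (A B : Type) : inj A B \/ inj B A.
Proof.
  set (P := fun G : A * B -> Prop =>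
    (forall a b b', G (a,b) -> G (a,b') -> b = b') /\
    (forall a a' b, G (a,b) -> G (a',b) -> a = a')).
  destruct (@zorn_sets (A * B) P) as [G [[G1 G2] Gmax]].
  - intros F FP Ftot. split.
    + intros a b b' [X [FX HX]] [Y [FY HY]].
      destruct (Ftot X Y FX FY) as [XY|YX].
      * apply (proj1 (FP Y FY) a); auto.
      * apply (proj1 (FP X FX) a); auto.
    + intros a a' b [X [FX HX]] [Y [FY HY]].
      destruct (Ftot X Y FX FY) as [XY|YX].
      * apply (proj2 (FP Y FY) _ _ b); auto.
      * apply (proj2 (FP X FX) _ _ b); auto.
  - destruct (classic (forall a, exists b, G (a,b))) as [HA|HA].
    + left. exists (fun a => proj1_sig (constructive_indefinite_description _ (HA a))).
      intros a a' E.
      destruct (constructive_indefinite_description _ (HA a)) as [b Hb].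
      destruct (constructive_indefinite_description _ (HA a')) as [b' Hb'].
      simpl in E; subst. eapply G2; eauto.
    + destruct (classic (forall b, exists a, G (a,b))) as [HB|HB].
      * right. exists (fun b => proj1_sig (constructive_indefinite_description _ (HB b))).
        intros b b' E.
        destruct (constructive_indefinite_description _ (HB b)) as [a Ha].
        destruct (constructive_indefinite_description _ (HB b')) as [a' Ha'].
        simpl in E; subst. eapply G1; eauto.
      * exfalso. apply not_all_ex_not in HA. destruct HA as [a0 Ha0].
        apply not_all_ex_not in HB. destruct HB as [b0 Hb0].
        assert (Hin : G (a0,b0)).
        { apply (Gmax (fun p => G p \/ p = (a0,b0))); auto.
          split.
          - intros a b b' [H1|H1] [H2|H2].
            + eapply G1; eauto.
            + injection H2; intros; subst. exfalso; apply Ha0; eauto.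
            + injection H1; intros; subst. exfalso; apply Ha0; eauto.
            + injection H1; injection H2; intros; subst; auto.
          - intros a a' b [H1|H1] [H2|H2].
            + eapply G2; eauto.
            + injection H2; intros; subst. exfalso; apply Hb0; eauto.
            + injection H1; intros; subst. exfalso; apply Hb0; eauto.
            + injection H1; injection H2; intros; subst; auto. }
        apply Ha0; eauto.
Qed.

Lemma DF (Y : Type) : ~ inj nat Y -> inj Y nat.
Proof.
  intros H.
  destruct (classic (exists l : list Y, forall y, In y l)) as [[l Hl]|Hl].
  - exists (fun y => proj1_sig (constructive_indefinite_description _ (In_nth_error l y (Hl y)))).
    intros a b.
    destruct (constructive_indefinite_description _ _) as [n Hn].
    destruct (constructive_indefinite_description _ _) as [m Hm]. simpl; intro; subst.
    rewrite Hn in Hm; injection Hm; auto.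
  - exfalso. apply H.
    assert (Hex : forall l : list Y, exists y, ~ In y l).
    { intro l. apply NNPP; intro N. apply Hl. exists l. intro y. apply NNPP; intro N2. apply N; eauto. }
    set (ch := fun l : list Y => proj1_sig (constructive_indefinite_description _ (Hex l))).
    assert (Hch : forall l, ~ In (ch l) l).
    { intro l; unfold ch; destruct (constructive_indefinite_description _ _); auto. }
    set (g := fix g (n : nat) : list Y := match n with 0 => nil | S n => ch (g n) :: g n end).
    assert (Hg : forall k n, k < n -> In (ch (g k)) (g n)).
    { intros k n; induction n; intro Hk; [lia|].
      simpl. destruct (Nat.eq_dec k n); [subst; left; auto|right; apply IHn; lia]. }
    exists (fun n => ch (g n)).
    intros a b E. destruct (Nat.lt_trichotomy a b) as [h|[h|h]]; auto.
    + exfalso. apply (Hch (g b)). rewrite <- E. apply Hg; auto.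
    + exfalso. apply (Hch (g a)). rewrite E. apply Hg; auto.
Qed.

Lemma unbounded_inj (P : nat -> Prop) : (forall k, exists n, k <= n /\ P n) ->
  exists s : nat -> nat, (forall m, P (s m)) /\ (forall m m', m < m' -> s m < s m').
Proof.
  intro H.
  set (ch := fun k => proj1_sig (constructive_indefinite_description _ (H k))).
  assert (Hch : forall k, k <= ch k /\ P (ch k)).
  { intro k; unfold ch; destruct (constructive_indefinite_description _ _); auto. }
  set (s := fix s (n : nat) : nat := match n with 0 => ch 0 | S n => ch (S (s n)) end).
  exists s. split.
  - intro m; destruct m; simpl; apply Hch.
  - intros m m' h. induction m'; [lia|].
    simpl. destruct (Hch (S (s m'))) as [h1 _].
    destruct (Nat.eq_dec m m'); [subst; lia|]. assert (s m < s m') by (apply IHm'; lia). lia.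
Qed.

Lemma pigeon B : inj nat (B + B) -> inj nat B.
Proof.
  intros [f Hf].
  assert (Hs : forall (s : nat -> nat), (forall m m', m < m' -> s m < s m') ->
             (forall m, exists b, f (s m) = inl b) \/ (forall m, exists b, f (s m) = inr b) ->
             inj nat B).
  { intros s Hmono Hside. exists (fun m => fromsum (f (s m))).
    assert (sinj : forall a b, s a = s b -> a = b).
    { intros a b E; destruct (Nat.lt_trichotomy a b) as [h|[h|h]]; auto;
      apply Hmono in h; lia. }
    intros a b E. apply sinj, Hf.
    destruct Hside as [HS|HS]; destruct (HS a) as [x Hx]; destruct (HS b) as [y Hy];
      rewrite Hx, Hy in *; simpl in E; subst; auto. }
  destruct (classic (forall k, exists n, k <= n /\ exists b, f n = inl b)) as [HL|HL].
  - destruct (unbounded_inj _ HL) as [s [Ps Ms]]. apply (Hs s Ms); left; auto.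
  - apply not_all_ex_not in HL; destruct HL as [k0 Hk0].
    assert (HR : forall k, exists n, k <= n /\ exists b, f n = inr b).
    { intro k. exists (k + k0). split; [lia|].
      destruct (f (k + k0)) as [b|b] eqn:E.
      - exfalso; apply Hk0; exists (k + k0); split; [lia|eauto].
      - eauto. }
    destruct (unbounded_inj _ HR) as [s [Ps Ms]]. apply (Hs s Ms); right; auto.
Qed.

Set Implicit Arguments.

Definition b2n (b : bool) := if b then 1 else 0.

Lemma double_inj D : inj nat D -> inj (D + D) D.
Proof.
  intros [e He].
  set (G0 := fun p : (D * bool) * D => exists n b, p = ((e n, b), e (2 * n + b2n b))).
  set (XG := fun (G : (D * bool) * D -> Prop) d => exists b y, G ((d,b),y)).
  set (Inv := fun G : (D * bool) * D -> Prop =>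
     (forall x y y', G (x,y) -> G (x,y') -> y = y') /\
     (forall x x' y, G (x,y) -> G (x',y) -> x = x') /\
     (forall d, XG G d -> forall b, exists y, G ((d,b),y)) /\
     (forall x y, G (x,y) -> XG G y)).
  set (P := fun G => (forall p, ~ G p) \/ ((forall p, G0 p -> G p) /\ Inv G)).
  assert (b2n_inj : forall n b n' b', 2 * n + b2n b = 2 * n' + b2n b' -> n = n' /\ b = b').
  { intros n b n' b' E; destruct b, b'; simpl in E; split; try lia; auto. }
  assert (InvG0 : Inv G0).
  { split; [|split; [|split]].
    - intros x y y' [n [b E]] [n' [b' E']]. injection E; intros Ey Ex; injection E'; intros Ey' Ex'.
      subst x y y'. injection Ex'; intros Eb En. apply He in En; subst; reflexivity.
    - intros x x' y [n [b E]] [n' [b' E']]. injection E; intros Ey Ex; injection E'; intros Ey' Ex'.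
      subst x x' y. apply He, b2n_inj in Ey'. destruct Ey'; subst; reflexivity.
    - intros d [b0 [y [n [b E]]]] b'. injection E; intros; subst.
      exists (e (2 * n + b2n b')). exists n, b'. reflexivity.
    - intros x y [n [b E]]. injection E; intros; subst.
      exists false, (e (2 * (2 * n + b2n b) + 0)). exists (2 * n + b2n b), false. reflexivity. }
  destruct (@zorn_sets _ P) as [G [PG Gmax]].
  - intros F FP Ftot.
    destruct (classic (exists X p, F X /\ X p)) as [[X1 [p1 [FX1 X1p]]]|Hne].
    + right.
      assert (HX : forall X, F X -> (exists p, X p) -> (forall p, G0 p -> X p) /\ Inv X).
      { intros X FX [p Xp]. destruct (FP X FX) as [h|h]; auto. exfalso; eapply h; eauto. }
      destruct (HX X1 FX1 (ex_intro _ p1 X1p)) as [G0X1 _].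
      split; [intros p Hp; exists X1; auto|].
      split; [|split; [|split]].
      * intros x y y' [X [FX HXp]] [Y [FY HYp]].
        destruct (Ftot X Y FX FY) as [XY|YX].
        -- destruct (HX Y FY (ex_intro _ _ HYp)) as [_ [I1 _]]. apply (I1 x); auto.
        -- destruct (HX X FX (ex_intro _ _ HXp)) as [_ [I1 _]]. apply (I1 x); auto.
      * intros x x' y [X [FX HXp]] [Y [FY HYp]].
        destruct (Ftot X Y FX FY) as [XY|YX].
        -- destruct (HX Y FY (ex_intro _ _ HYp)) as [_ [_ [I2 _]]]. apply (I2 _ _ y); auto.
        -- destruct (HX X FX (ex_intro _ _ HXp)) as [_ [_ [I2 _]]]. apply (I2 _ _ y); auto.
      * intros d [b [y [X [FX HXp]]]] b'.
        destruct (HX X FX (ex_intro _ _ HXp)) as [_ [_ [_ [I3 _]]]].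
        destruct (I3 d (ex_intro _ b (ex_intro _ y HXp)) b') as [y' Hy'].
        exists y', X; auto.
      * intros x y [X [FX HXp]].
        destruct (HX X FX (ex_intro _ _ HXp)) as [_ [_ [_ [_ I4]]]].
        destruct (I4 x y HXp) as [b [z Hz]]. exists b, z, X; auto.
    + left. intros p [X [FX Xp]]. apply Hne; eauto.
  - assert (Gne : (forall p, G0 p -> G p) /\ Inv G).
    { destruct PG as [h|h]; auto. exfalso.
      assert (G0 ((e 0, false), e (2 * 0 + b2n false))) as H0 by (exists 0, false; auto).
      apply (h _ (Gmax G0 (fun p Gp => False_ind _ (h p Gp)) (or_intror (conj (fun p x => x) InvG0)) _ H0)). }
    destruct Gne as [G0G [I1 [I2 [I3 I4]]]].
    assert (DFc : ~ inj nat {d | ~ XG G d}).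
    { intros [e' He'].
      set (E' := fun n => proj1_sig (e' n)).
      assert (He2 : forall n n', E' n = E' n' -> n = n').
      { intros n n' E. apply He'. apply eq_sig_hprop; auto. }
      assert (HE' : forall n, ~ XG G (E' n)) by (intro n; exact (proj2_sig (e' n))).
      set (G' := fun p => G p \/ exists n b, p = ((E' n, b), E' (2 * n + b2n b))).
      assert (Hsub : forall p, G' p -> G p).
      { apply Gmax; [intros p Gp; left; auto|].
        right. split; [intros p Hp; left; auto|].
        split; [|split; [|split]].
        - intros x y y' [H1|[n [b E1]]] [H2|[n' [b' E2]]].
          + eapply I1; eauto.
          + injection E2; intros Ey Ex; subst x y'. exfalso; apply (HE' n'). exists b', y; auto.
          + injection E1; intros Ey Ex; subst x y. exfalso; apply (HE' n). exists b, y'; auto.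
          + injection E1; intros Ey Ex; injection E2; intros Ey' Ex'; subst x y y'.
            injection Ex'; intros Eb En. apply He2 in En; subst; auto.
        - intros x x' y [H1|[n [b E1]]] [H2|[n' [b' E2]]].
          + eapply I2; eauto.
          + injection E2; intros Ey Ex; subst x' y. exfalso; apply (HE' _ (I4 _ _ H1)).
          + injection E1; intros Ey Ex; subst x y. exfalso; apply (HE' _ (I4 _ _ H2)).
          + injection E1; intros Ey Ex; injection E2; intros Ey' Ex'; subst x x' y.
            apply He2, b2n_inj in Ey'. destruct Ey'; subst; auto.
        - intros d [b [y [H1|[n [b0 E1]]]]] b'.
          + destruct (I3 d (ex_intro _ b (ex_intro _ y H1)) b') as [y' Hy']. exists y'; left; auto.
          + injection E1; intros Ey Eb Ed; subst d. exists (E' (2 * n + b2n b')). right. exists n, b'; auto.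
        - intros x y [H1|[n [b E1]]].
          + destruct (I4 _ _ H1) as [b [z Hz]]. exists b, z; left; auto.
          + injection E1; intros Ey Ex; subst y. exists false, (E' (2 * (2 * n + b2n b) + 0)).
            right. exists (2 * n + b2n b), false; auto. }
      apply (HE' 0). exists false, (E' (2 * 0 + b2n false)). apply Hsub. right. exists 0, false; auto. }
    destruct (DF DFc) as [c Hc].
    set (h := fun d b => epsilon (inhabits d) (fun y => G ((d,b),y))).
    assert (Hh : forall d b, XG G d -> G ((d,b), h d b)).
    { intros d b Xd. unfold h. apply epsilon_spec. apply I3; auto. }
    assert (HhX : forall d b, XG G d -> XG G (h d b)).
    { intros d b Xd. eapply I4. apply Hh; auto. }
    assert (Hhi : forall d b d' b', XG G d -> XG G d' -> h d b = h d' b' -> d = d' /\ b = b').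
    { intros d b d' b' X1 X2 E. pose proof (Hh d b X1). pose proof (Hh d' b' X2).
      rewrite E in H. assert (HH := I2 _ _ _ H H0). injection HH; auto. }
    assert (HeX : forall n, XG G (e n)).
    { intro n. exists false, (e (2 * n + b2n false)). apply G0G. exists n, false; auto. }
    set (reg3 := fun k => h (h (e k) true) true).
    set (u := fun (x : D + D) =>
      match x with
      | inl d => match excluded_middle_informative (XG G d) with
                 | left _ => h d false
                 | right nX => reg3 (2 * c (exist _ d nX) + 0) end
      | inr d => match excluded_middle_informative (XG G d) with
                 | left _ => h (h d false) true
                 | right nX => reg3 (2 * c (exist _ d nX) + 1) end
      end).
    assert (r1r2 : forall d d', XG G d -> XG G d' -> h d false <> h (h d' false) true).
    { intros d d' X1 X2 E. apply Hhi in E; auto. destruct E; discriminate. }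
    assert (r1r3 : forall d k, XG G d -> h d false <> reg3 k).
    { intros d k X1 E. apply Hhi in E; auto. destruct E; discriminate. }
    assert (r2r3 : forall d k, XG G d -> h (h d false) true <> reg3 k).
    { intros d k X1 E. apply Hhi in E; auto. destruct E as [E _]. apply Hhi in E; auto.
      destruct E; discriminate. }
    assert (r3i : forall k k', reg3 k = reg3 k' -> k = k').
    { intros k k' E. apply Hhi in E; auto. destruct E as [E _]. apply Hhi in E; auto.
      destruct E as [E _]. apply He; auto. }
    assert (cinj : forall d d' (n : ~ XG G d) (n' : ~ XG G d'), c (exist _ d n) = c (exist _ d' n') -> d = d').
    { intros d d' n n' E. apply Hc in E. injection E; auto. }
    exists u. intros [d|d] [d'|d']; unfold u; simpl;
      destruct (excluded_middle_informative (XG G d)) as [x1|x1];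
      destruct (excluded_middle_informative (XG G d')) as [x2|x2]; intro E.
    all: try (exfalso; solve [ eapply r1r2; eauto | eapply r1r2; symmetry; eauto
           | eapply r1r3; eauto | eapply r1r3; symmetry; eauto
           | eapply r2r3; eauto | eapply r2r3; symmetry; eauto ]).
    all: try (apply r3i in E; lia).
    + apply Hhi in E; auto. destruct E; subst; auto.
    + apply r3i in E. f_equal. eapply cinj. instantiate (1 := x2). instantiate (1 := x1). lia.
    + exfalso; exact (r1r2 d d' x1 x2 E).
    + exfalso; exact (r1r2 d' d x2 x1 (eq_sym E)).
    + apply Hhi in E; auto. destruct E as [E _]. apply Hhi in E; auto. destruct E; subst; auto.
    + apply r3i in E. f_equal. eapply cinj. instantiate (1 := x2). instantiate (1 := x1). lia.
Qed.

Set Implicit Arguments.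

Lemma small_sum K X Y : inj nat K -> small K X -> small K Y -> small K (X + Y).
Proof.
  intros HK HX HY [g Hg].
  set (KX := {k : K | exists x, g k = inl x}).
  set (KY := {k : K | exists y, g k = inr y}).
  assert (sX : small K KX).
  { apply (small_inj (Y := X)); auto.
    exists (fun p : KX => proj1_sig (constructive_indefinite_description _ (proj2_sig p))).
    intros [a Ha] [b Hb]; simpl.
    destruct (constructive_indefinite_description _ Ha) as [x Hx].
    destruct (constructive_indefinite_description _ Hb) as [y Hy]. simpl. intro; subst.
    apply eq_sig_hprop; [intros; apply proof_irrelevance|]. simpl. apply Hg; congruence. }
  assert (sY : small K KY).
  { apply (small_inj (Y := Y)); auto.
    exists (fun p : KY => proj1_sig (constructive_indefinite_description _ (proj2_sig p))).
    intros [a Ha] [b Hb]; simpl.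
    destruct (constructive_indefinite_description _ Ha) as [x Hx].
    destruct (constructive_indefinite_description _ Hb) as [y Hy]. simpl. intro; subst.
    apply eq_sig_hprop; [intros; apply proof_irrelevance|]. simpl. apply Hg; congruence. }
  assert (KXY : inj K (KX + KY)).
  { assert (dec : forall k, {exists x, g k = inl x} + {exists y, g k = inr y}).
    { intro k. destruct (g k) as [x|y] eqn:E; [left|right]; eauto. }
    exists (fun k => match dec k with left p => inl (exist _ k p) | right p => inr (exist _ k p) end).
    intros a b. destruct (dec a); destruct (dec b); intro E; try discriminate;
      injection E; intro E'; first [exact E' | apply (f_equal (@proj1_sig _ _)) in E'; exact E']. }
  assert (gen : forall Z W, small K Z -> small K W -> inj K (Z + W) -> inj Z W -> False).
  { intros Z W sZ sW KZW ZW.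
    assert (KWW : inj K (W + W)) by (apply (inj_trans KZW); apply inj_sum; auto using inj_refl).
    destruct (classic (inj nat W)) as [nW|nW].
    - apply sW. apply (inj_trans KWW). apply double_inj; auto.
    - apply nW. apply pigeon. apply (inj_trans HK KWW). }
  destruct (comparable KX KY) as [h|h].
  - exact (gen _ _ sX sY KXY h).
  - apply (gen _ _ sY sX); auto.
    apply (inj_trans KXY).
    exists (fun z => match z with inl a => inr a | inr b => inl b end).
    intros [a|a] [b|b] E; try discriminate; injection E; intro; subst; auto.
Qed.

Lemma subset_small_sub K T (A B : T -> Prop) :
  (forall x, A x -> B x) -> subset_small K B -> subset_small K A.
Proof.
  intros H sB. unfold subset_small in *. apply (small_inj (Y := {x | B x})); auto.
  exists (fun p : {x | A x} => exist _ (proj1_sig p) (H _ (proj2_sig p))).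
  intros [a Ha] [b Hb] E. injection E; intro; subst. f_equal. apply proof_irrelevance.
Qed.

Lemma subset_small_union K T (A B : T -> Prop) : inj nat K ->
  subset_small K A -> subset_small K B -> subset_small K (fun x => A x \/ B x).
Proof.
  intros HK sA sB. unfold subset_small in *.
  apply (small_inj (Y := {x | A x} + {x | B x})); [|apply small_sum; auto].
  exists (fun p : {x | A x \/ B x} =>
    match excluded_middle_informative (A (proj1_sig p)) with
    | left h => inl (exist _ _ h)
    | right h => inr (exist _ _ (match proj2_sig p with or_introl a => False_ind _ (h a) | or_intror b => b end))
    end).
  intros [a Ha] [b Hb]; simpl.
  destruct (excluded_middle_informative (A a)); destruct (excluded_middle_informative (A b));
    intro E; try discriminate; injection E; intro; subst; f_equal; apply proof_irrelevance.
Qed.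

Lemma subset_small_img K J T (P : J -> T -> Prop) :
  (forall j c c', P j c -> P j c' -> c = c') -> small K J ->
  subset_small K (fun c => exists j, P j c).
Proof.
  intros Hf sJ. unfold subset_small. apply (small_inj (Y := J)); auto.
  exists (fun p : {c | exists j, P j c} => proj1_sig (constructive_indefinite_description _ (proj2_sig p))).
  intros [a Ha] [b Hb]; simpl.
  destruct (constructive_indefinite_description _ Ha) as [j Pj].
  destruct (constructive_indefinite_description _ Hb) as [j' Pj']. simpl. intro; subst.
  assert (a = b) by (eapply Hf; eauto). subst. f_equal. apply proof_irrelevance.
Qed.

Lemma subset_small_range K J T (f : J -> T) : small K J -> subset_small K (range f).
Proof.
  intro sJ. apply (@subset_small_img K J T (fun j c => f j = c)); auto.
  intros; congruence.
Qed.

Set Implicit Arguments.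
Unset Strict Implicit.

Section Syn.
Variable L : language.

Fixpoint term_ind' (P : term L -> Prop) (Hv : forall k, P (tvar L k))
  (Ha : forall f ts, (forall i, P (ts i)) -> P (@tapp L f ts)) (t : term L) : P t :=
  match t with
  | tvar _ k => Hv k
  | @tapp _ f ts => Ha f ts (fun i => term_ind' Hv Ha (ts i))
  end.

Lemma eval_ext (M : structure L) (v w : nat -> M) t :
  (forall n, fv_term t n -> v n = w n) -> eval v t = eval w t.
Proof.
  induction t using term_ind'; simpl; intros Hv.
  - apply Hv; reflexivity.
  - f_equal. apply functional_extensionality; intro i. apply H. intros n Hn; apply Hv; eauto.
Qed.

Lemma sat_ext (M : structure L) (phi : formula L) : forall (v w : nat -> M),
  (forall n, fv phi n -> v n = w n) -> (sat v phi <-> sat w phi).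
Proof.
  induction phi; simpl; intros v w H.
  - rewrite (eval_ext (t:=t) (v:=v) (w:=w)), (eval_ext (t:=t0) (v:=v) (w:=w)); auto; tauto.
  - replace (fun i => eval v (t i)) with (fun i => eval w (t i)); [tauto|].
    apply functional_extensionality; intro i; symmetry; apply eval_ext; eauto.
  - rewrite (IHphi v w); auto; tauto.
  - rewrite (IHphi1 v w), (IHphi2 v w); auto; tauto.
  - split; intros [m Hm]; exists m; revert Hm; apply IHphi; intros k Hk; unfold upd;
      destruct (Nat.eqb_spec k n); auto.
    all: first [ apply H; auto | symmetry; apply H; auto ].
Qed.

Definition iso (S1 S2 : structure L) (F : S1 -> S2) : Prop :=
  (forall a b, F a = F b -> a = b) /\ (forall b, exists a, F a = b) /\
  (forall f args, F (ifun S1 f args) = ifun S2 f (fun i => F (args i))) /\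
  (forall r args, irel S1 r args <-> irel S2 r (fun i => F (args i))).

Lemma iso_eval S1 S2 F (HF : @iso S1 S2 F) (v : nat -> S1) t :
  eval (fun n => F (v n)) t = F (eval v t).
Proof.
  destruct HF as [_ [_ [Hf _]]].
  induction t using term_ind'; simpl; auto.
  rewrite Hf. f_equal. apply functional_extensionality; auto.
Qed.

Lemma iso_sat S1 S2 F (HF : @iso S1 S2 F) phi : forall (v : nat -> S1),
  sat (fun n => F (v n)) phi <-> sat v phi.
Proof.
  pose proof HF as [Hi [Hs [Hfun Hr]]].
  induction phi; simpl; intro v.
  - rewrite !(iso_eval HF). split; intro E; [apply Hi; auto | rewrite E; auto].
  - rewrite Hr.
    replace (fun i => F (eval v (t i))) with (fun i => eval (fun n => F (v n)) (t i)); [tauto|].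
    apply functional_extensionality; intro; apply (iso_eval HF).
  - rewrite IHphi; tauto.
  - rewrite IHphi1, IHphi2; tauto.
  - split.
    + intros [m Hm]. destruct (Hs m) as [m1 E]. subst m.
      exists m1. apply IHphi. revert Hm. apply sat_ext. intros k _. unfold upd.
      destruct (Nat.eqb k n); auto.
    + intros [m1 Hm]. exists (F m1). apply IHphi in Hm. revert Hm. apply sat_ext. intros k _. unfold upd.
      destruct (Nat.eqb k n); auto.
Qed.

Fixpoint tren (r : nat -> nat) (t : term L) : term L :=
  match t with
  | tvar _ k => tvar L (r k)
  | @tapp _ f ts => @tapp L f (fun i => tren r (ts i))
  end.

Fixpoint fren (r : nat -> nat) (phi : formula L) : formula L :=
  match phi with
  | feq t u => feq (tren r t) (tren r u)
  | @frel _ R ts => @frel L R (fun i => tren r (ts i))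
  | fneg p => fneg (fren r p)
  | fand p q => fand (fren r p) (fren r q)
  | fex k p => fex (r k) (fren r p)
  end.

Lemma tren_eval (M : structure L) (v : nat -> M) r t :
  eval v (tren r t) = eval (fun n => v (r n)) t.
Proof.
  induction t using term_ind'; simpl; auto. f_equal; apply functional_extensionality; auto.
Qed.

Lemma fren_sat (M : structure L) r (Hr : forall a b, r a = r b -> a = b) phi :
  forall (v : nat -> M), sat v (fren r phi) <-> sat (fun n => v (r n)) phi.
Proof.
  induction phi; simpl; intro v.
  - rewrite !tren_eval; tauto.
  - replace (fun i => eval v (tren r (t i))) with (fun i => eval (fun n => v (r n)) (t i)); [tauto|].
    apply functional_extensionality; intro; rewrite tren_eval; auto.
  - rewrite IHphi; tauto.
  - rewrite IHphi1, IHphi2; tauto.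
  - split; intros [m Hm]; exists m; [apply IHphi in Hm|apply IHphi]; revert Hm; apply sat_ext;
      intros k _; unfold upd; destruct (Nat.eqb_spec k n); destruct (Nat.eqb_spec (r k) (r n));
      subst; auto; exfalso; auto.
Qed.

Lemma tren_fv r t n : fv_term (tren r t) n -> exists m, n = r m /\ fv_term t m.
Proof.
  induction t using term_ind'; simpl.
  - intro; subst; eauto.
  - intros [i Hi]. destruct (H i Hi) as [m [E Hm]]. exists m; split; eauto.
Qed.

Lemma fren_fv r (Hr : forall a b, r a = r b -> a = b) phi n :
  fv (fren r phi) n -> exists m, n = r m /\ fv phi m.
Proof.
  revert n; induction phi; simpl; intros n0 H.
  - destruct H as [H|H]; apply tren_fv in H; destruct H as [m [E Hm]]; eauto.
  - destruct H as [i Hi]; apply tren_fv in Hi; destruct Hi as [m [E Hm]]; eauto.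
  - auto.
  - destruct H as [H|H]; [apply IHphi1 in H|apply IHphi2 in H]; destruct H as [m [E Hm]]; eauto.
  - destruct H as [Hne H]. apply IHphi in H. destruct H as [m [E Hm]]. subst.
    exists m; split; [reflexivity|]. split; [|exact Hm]. intro; subst; auto.
Qed.

Fixpoint fins (n : nat) : list (Fin.t n) :=
  match n with 0 => nil | S n => Fin.F1 :: map Fin.FS (fins n) end.

Lemma fins_all n (i : Fin.t n) : In i (fins n).
Proof.
  induction i; simpl; auto. right. apply in_map; auto.
Qed.

Fixpoint tvars (t : term L) : list nat :=
  match t with
  | tvar _ k => k :: nil
  | @tapp _ f ts => flat_map (fun i => tvars (ts i)) (fins (fun_ar f))
  end.

Fixpoint allv (phi : formula L) : list nat :=
  match phi with
  | feq t u => tvars t ++ tvars u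
  | @frel _ R ts => flat_map (fun i => tvars (ts i)) (fins (rel_ar R))
  | fneg p => allv p
  | fand p q => allv p ++ allv q
  | fex k p => allv p
  end.

Lemma tvars_fv t n : fv_term t n -> In n (tvars t).
Proof.
  induction t using term_ind'; simpl.
  - auto.
  - intros [i Hi]. apply in_flat_map. exists i; split; auto. apply fins_all.
Qed.

Lemma allv_fv phi n : fv phi n -> In n (allv phi).
Proof.
  induction phi; simpl; intro H.
  - apply in_or_app; destruct H; [left|right]; apply tvars_fv; auto.
  - destruct H as [i Hi]. apply in_flat_map. exists i; split; [apply fins_all|apply tvars_fv; auto].
  - auto.
  - apply in_or_app; destruct H; auto.
  - apply IHphi, H.
Qed.

Definition Ftrue : formula L := fneg (fex 0 (fneg (feq (tvar L 0) (tvar L 0)))).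

Lemma Ftrue_sat (M : structure L) (v : nat -> M) : sat v Ftrue.
Proof. simpl. intros [m Hm]. apply Hm. reflexivity. Qed.

Lemma Ftrue_fv n : ~ fv Ftrue n.
Proof. simpl. intros [H1 [H2|H2]]; simpl in H2; auto. Qed.

Definition bigand (l : list (formula L)) : formula L := fold_right (@fand L) Ftrue l.

Lemma bigand_sat (M : structure L) (v : nat -> M) l :
  sat v (bigand l) <-> forall phi, In phi l -> sat v phi.
Proof.
  induction l; simpl.
  - split; [tauto|]. intros _; exact (Ftrue_sat (v:=v)).
  - rewrite IHl. split; [intros [H1 H2] phi [E|E]; subst; auto|intros H; split; auto].
Qed.

Lemma bigand_fv l n : fv (bigand l) n -> exists phi, In phi l /\ fv phi n.
Proof.
  induction l; simpl; intro H.
  - exfalso; exact (Ftrue_fv (n:=n) H).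
  - destruct H as [H|H]; [exists a; auto|]. destruct (IHl H) as [p [Hp1 Hp2]]; eauto.
Qed.

Definition exs (l : list nat) (psi : formula L) : formula L := fold_right (@fex L) psi l.

Lemma exs_sat (M : structure L) l psi : forall (v : nat -> M),
  sat v (exs l psi) <-> exists w, (forall n, ~ In n l -> w n = v n) /\ sat w psi.
Proof.
  induction l; simpl; intro v.
  - split; [intro H; exists v; auto|]. intros [w [Hw H]]. revert H; apply sat_ext; intros n _; symmetry; apply Hw; auto.
  - split.
    + intros [m Hm]. apply IHl in Hm. destruct Hm as [w [Hw H]]. exists w; split; auto.
      intros n Hn. rewrite Hw by tauto. unfold upd. destruct (Nat.eqb_spec n a); subst; tauto.
    + intros [w [Hw H]]. exists (w a). apply IHl. exists w; split; auto.
      intros n Hn. unfold upd. destruct (Nat.eqb_spec n a); subst; auto. apply Hw; intros [E|E]; [congruence|auto].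
Qed.

Lemma exs_fv l psi n : fv (exs l psi) n -> ~ In n l /\ fv psi n.
Proof.
  induction l; simpl; intro H; auto.
  destruct H as [H1 H2]. apply IHl in H2. destruct H2; split; auto. intros [E|E]; auto.
Qed.

End Syn.

Set Implicit Arguments.
Unset Strict Implicit.

Definition dec (P : Prop) : bool := if excluded_middle_informative P then true else false.
Lemma decT (P : Prop) : P -> dec P = true.
Proof. unfold dec; destruct (excluded_middle_informative P); tauto. Qed.
Lemma decF (P : Prop) : ~ P -> dec P = false.
Proof. unfold dec; destruct (excluded_middle_informative P); tauto. Qed.
Lemma decP (P : Prop) : dec P = true <-> P.
Proof. unfold dec; destruct (excluded_middle_informative P); split; auto; discriminate. Qed.

Section PF.
Variables (L : language) (C : structure L) (I : Type).

Lemma psat_ext (b b' : I -> C) (phi : formula L) s :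
  (forall n i, fv phi n -> s n = inl i -> b i = b' i) -> (psat b (phi, s) <-> psat b' (phi, s)).
Proof.
  intro H. unfold psat; simpl. apply sat_ext. intros n Hn. unfold valuation.
  destruct (s n) eqn:E; auto. eapply H; eauto.
Qed.

Definition dbl (n : nat) := 2 * n.
Definition sdbl (n : nat) := 2 * n + 1.
Lemma dbl_inj a b : dbl a = dbl b -> a = b. Proof. unfold dbl; lia. Qed.
Lemma sdbl_inj a b : sdbl a = sdbl b -> a = b. Proof. unfold sdbl; lia. Qed.
Lemma even_dbl n : Nat.even (dbl n) = true. Proof. apply Nat.even_even. Qed.
Lemma even_sdbl n : Nat.even (sdbl n) = false. Proof. apply Nat.even_odd. Qed.
Lemma div2_dbl n : Nat.div2 (dbl n) = n. Proof. apply Nat.div2_double. Qed.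
Lemma div2_sdbl n : Nat.div2 (sdbl n) = n.
Proof. unfold sdbl. rewrite Nat.add_1_r. apply Nat.div2_succ_double. Qed.

Fixpoint pconj (i0 : I) (l : list (pformula I C)) : pformula I C :=
  match l with
  | nil => (Ftrue L, fun _ => inl i0)
  | x :: l => let y := pconj i0 l in
      (fand (fren dbl (fst x)) (fren sdbl (fst y)),
       fun n => if Nat.even n then snd x (Nat.div2 n) else snd y (Nat.div2 n))
  end.

Lemma psat_pconj i0 l (b : I -> C) : psat b (pconj i0 l) <-> forall x, In x l -> psat b x.
Proof.
  induction l as [|[phi s] l IH]; simpl.
  - unfold psat; simpl. split; [tauto|]. intros _. exact (Ftrue_sat (v:=valuation b (fun _ => inl i0))).
  - unfold psat at 1; simpl. rewrite (fren_sat dbl_inj), (fren_sat sdbl_inj).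
    assert (E1 : sat (fun n => valuation b (fun n0 => if Nat.even n0 then s (Nat.div2 n0)
               else snd (pconj i0 l) (Nat.div2 n0)) (dbl n)) phi <-> psat b (phi, s)).
    { unfold psat; simpl. apply sat_ext. intros n _. unfold valuation. rewrite even_dbl, div2_dbl. auto. }
    assert (E2 : sat (fun n => valuation b (fun n0 => if Nat.even n0 then s (Nat.div2 n0)
               else snd (pconj i0 l) (Nat.div2 n0)) (sdbl n)) (fst (pconj i0 l)) <-> psat b (pconj i0 l)).
    { unfold psat; simpl. apply sat_ext. intros n _. unfold valuation. rewrite even_sdbl, div2_sdbl. auto. }
    rewrite E1, E2, IH. split.
    + intros [H1 H2] x [E|E]; subst; auto.
    + intros H; split; auto.
Qed.

Lemma over_pconj (A : C -> Prop) i0 l : (forall x, In x l -> over A x) -> over A (pconj i0 l).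
Proof.
  induction l as [|[phi s] l IH]; simpl; intros H.
  - intros n c Hn. exfalso; exact (Ftrue_fv (n:=n) Hn).
  - intros n c Hn Hs. simpl in Hn, Hs. destruct Hn as [Hn|Hn].
    + apply (fren_fv dbl_inj) in Hn. destruct Hn as [m [E Hm]]. subst.
      rewrite even_dbl, div2_dbl in Hs. exact (H (phi, s) (or_introl eq_refl) m c Hm Hs).
    + apply (fren_fv sdbl_inj) in Hn. destruct Hn as [m [E Hm]]. subst.
      rewrite even_sdbl, div2_sdbl in Hs. exact (IH (fun x h => H x (or_intror h)) m c Hm Hs).
Qed.

Definition coords (x : pformula I C) : list I :=
  flat_map (fun n => match snd x n with inl i => i :: nil | inr _ => nil end) (allv (fst x)).

Lemma coords_In phi s n i : fv phi n -> s n = inl i -> In i (coords (phi, s)).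
Proof.
  intros Hn Hs. unfold coords. apply in_flat_map. exists n. split.
  - apply allv_fv; auto.
  - simpl. rewrite Hs. left; auto.
Qed.

Section Theta.
Variables (j : I) (D : I -> Prop) (gv : I -> C).

Definition badv (s : nat -> I + C) (n : nat) : Prop :=
  match s n with inl i => i <> j /\ ~ D i | inr _ => False end.

Definition Qv (x : pformula I C) : list nat := filter (fun n => dec (badv (snd x) n)) (allv (fst x)).

Definition Eqs (x : pformula I C) : formula L :=
  bigand (map (fun p => feq (tvar L (fst p)) (tvar L (snd p)))
     (filter (fun p => dec (snd x (fst p) = snd x (snd p))) (list_prod (Qv x) (Qv x)))).

Definition s' (s : nat -> I + C) : nat -> unit + C :=
  fun n => match s n with
           | inr c => inr c
           | inl i => if dec (i = j) then inl tt else if dec (D i) then inr (gv i) else inl tt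
           end.

Definition Theta (x : pformula I C) : pformula unit C :=
  (exs (Qv x) (fand (Eqs x) (fst x)), s' (snd x)).

Lemma Eqs_sat x (w : nat -> C) : sat w (Eqs x) <->
  forall n m, In n (Qv x) -> In m (Qv x) -> snd x n = snd x m -> w n = w m.
Proof.
  unfold Eqs. rewrite bigand_sat. split.
  - intros H n m Hn Hm E. specialize (H (feq (tvar L n) (tvar L m))). simpl in H. apply H.
    apply in_map_iff. exists (n, m). split; auto. apply filter_In. split.
    + apply in_prod; auto.
    + apply decT; auto.
  - intros H phi Hphi. apply in_map_iff in Hphi. destruct Hphi as [[n m] [E Hin]]. subst. simpl.
    apply filter_In in Hin. destruct Hin as [Hin Hd]. apply in_prod_iff in Hin. simpl in Hd.
    apply (proj1 (decP _)) in Hd. idtac. apply H; [tauto|tauto|exact Hd].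
Qed.

Lemma Eqs_fv x n : fv (Eqs x) n -> In n (Qv x).
Proof.
  unfold Eqs. intro H. apply bigand_fv in H. destruct H as [phi [Hin Hfv]].
  apply in_map_iff in Hin. destruct Hin as [[a b] [E Hin]]. subst. simpl in Hfv.
  apply filter_In in Hin. destruct Hin as [Hin _]. apply in_prod_iff in Hin.
  destruct Hfv as [H|H]; simpl in H; subst; tauto.
Qed.

Lemma Theta_sem (nDj : ~ D j) (x : pformula I C) (c : C) :
  psat (fun _ : unit => c) (Theta x) <->
  exists b, b j = c /\ (forall i, D i -> b i = gv i) /\ psat b x.
Proof.
  destruct x as [phi s]. unfold Theta, psat; simpl.
  rewrite exs_sat.
  set (v' := valuation (fun _ : unit => c) (s' s)).
  assert (Qchar : forall n, In n (Qv (phi, s)) <-> In n (allv phi) /\ badv s n).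
  { intro n. unfold Qv. rewrite filter_In. simpl. rewrite decP. tauto. }
  split.
  - intros [w [Hw [HE Hphi]]].
    rewrite (Eqs_sat (phi, s)) in HE. simpl in HE.
    set (b := fun i => if dec (i = j) then c else if dec (D i) then gv i else
                 epsilon (inhabits c) (fun d => exists n, In n (Qv (phi, s)) /\ s n = inl i /\ w n = d)).
    exists b. split; [|split].
    + unfold b. rewrite decT; auto.
    + intros i Di. unfold b. rewrite decF by (intro; subst; auto). rewrite decT; auto.
    + revert Hphi. apply sat_ext. intros n Hn. unfold valuation.
      destruct (classic (In n (Qv (phi, s)))) as [HQ|HQ].
      * pose proof HQ as HQ'. apply Qchar in HQ'. destruct HQ' as [_ Hbad]. unfold badv in Hbad.
        destruct (s n) as [i|d] eqn:Es; [|contradiction]. destruct Hbad as [Hij HDi].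
        unfold b. rewrite decF by auto. rewrite decF by auto.
        assert (Hex : exists d, exists n, In n (Qv (phi, s)) /\ s n = inl i /\ w n = d) by eauto.
        pose proof (epsilon_spec (inhabits c) _ Hex) as [n' [Hn' [Es' Ew]]].
        rewrite <- Ew. apply HE; auto. congruence.
      * rewrite Hw by auto. unfold v', valuation, s'.
        destruct (s n) as [i|d] eqn:Es; auto.
        assert (nb : ~ badv s n) by (intro Hb; apply HQ, Qchar; split; auto; apply allv_fv; auto).
        unfold badv in nb; rewrite Es in nb.
        unfold b. destruct (classic (i = j)) as [Eij|Nij].
        -- rewrite !decT by auto. auto.
        -- rewrite !decF by auto. assert (D i) by (apply NNPP; intro; apply nb; auto).
           rewrite !decT by auto. auto.
  - intros [b [Hbj [HbD Hphi]]].
    exists (fun n => if dec (In n (Qv (phi, s))) then valuation b s n else v' n).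
    split; [|split].
    + intros n Hn. rewrite decF; auto.
    + rewrite (Eqs_sat (phi, s)). simpl. intros n m Hn Hm E. rewrite !decT by auto.
      unfold valuation; rewrite E; auto.
    + revert Hphi. apply sat_ext. intros n Hn.
      destruct (classic (In n (Qv (phi, s)))) as [HQ|HQ]; [rewrite decT; auto|rewrite decF by auto].
      unfold v', valuation, s'. destruct (s n) as [i|d] eqn:Es; auto.
      assert (nb : ~ badv s n) by (intro Hb; apply HQ, Qchar; split; auto; apply allv_fv; auto).
      unfold badv in nb; rewrite Es in nb.
      destruct (classic (i = j)) as [Eij|Nij].
      * subst. rewrite decT; auto.
      * rewrite decF by auto. assert (D i) by (apply NNPP; intro; apply nb; auto).
        rewrite decT by auto. symmetry; auto.
Qed.

Lemma Theta_over (A : C -> Prop) x : over A x ->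
  over (fun c => A c \/ exists i, D i /\ gv i = c) (Theta x).
Proof.
  destruct x as [phi s]. intros Hov n c Hn Hs. unfold Theta in *; simpl in *.
  apply exs_fv in Hn. destruct Hn as [HnQ [Hn|Hn]]; simpl in Hn.
  - exfalso; apply HnQ; apply Eqs_fv; auto.
  - unfold s' in Hs. destruct (s n) as [i|d] eqn:Es.
    + destruct (dec (i = j)); [discriminate|].
      destruct (dec (D i)) eqn:Ed; [|discriminate]. injection Hs; intro; subst.
      right; exists i; split; auto. apply decP; auto.
    + injection Hs; intro; subst. left. exact (Hov n c Hn Es).
Qed.

End Theta.
End PF.

Set Implicit Arguments.
Unset Strict Implicit.

Lemma chain_fin T (F : (T -> Prop) -> Prop)
  (Ftot : forall X Y, F X -> F Y -> (forall t, X t -> Y t) \/ (forall t, Y t -> X t)) :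
  forall ps : list T, (forall p, In p ps -> exists X, F X /\ X p) ->
  ps = nil \/ exists X, F X /\ forall p, In p ps -> X p.
Proof.
  induction ps as [|a ps IH]; intro H; [left; auto|right].
  destruct (H a (or_introl eq_refl)) as [X [FX Xa]].
  destruct (IH (fun p h => H p (or_intror h))) as [E|[Y [FY HY]]].
  - subst. exists X; split; auto. intros p [E|E]; [subst; auto|contradiction].
  - destruct (Ftot X Y FX FY) as [XY|YX].
    + exists Y; split; auto. intros p [E|E]; subst; auto.
    + exists X; split; auto. intros p [E|E]; subst; auto.
Qed.

Theorem realize_type L K (C : structure L) (HK : inj nat K) (Hsat : kappa_saturated K C)
  I (HI : small K I) (A : C -> Prop) (HA : subset_small K A)
  (Sigma : pformula I C -> Prop) (Hover : forall x, Sigma x -> over A x) (Hfs : fin_sat Sigma) :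
  exists b : I -> C, realizes b Sigma.
Proof.
  destruct (Hfs nil (fun x h => False_ind _ h)) as [b00 _].
  set (Good := fun G : I * C -> Prop =>
    (forall i c c', G (i,c) -> G (i,c') -> c = c') /\
    (forall l ps, (forall x, In x l -> Sigma x) -> (forall p, In p ps -> G p) ->
       exists b : I -> C, (forall p, In p ps -> b (fst p) = snd p) /\ forall x, In x l -> psat b x)).
  destruct (@zorn_sets _ Good) as [G [[G1 G2] Gmax]].
  - intros F FP Ftot. split.
    + intros i c c' [X [FX HX]] [Y [FY HY]].
      destruct (Ftot X Y FX FY) as [XY|YX].
      * apply (proj1 (FP Y FY) i); auto.
      * apply (proj1 (FP X FX) i); auto.
    + intros l ps Hl Hps.
      destruct (chain_fin Ftot Hps) as [E|[X [FX HX]]].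
      * subst. destruct (Hfs l Hl) as [b Hb]. exists b; split; auto. intros p [].
      * apply (proj2 (FP X FX)); auto.
  - set (Dm := fun i => exists c, G (i,c)).
    set (gv := fun i => epsilon (inhabits (b00 i)) (fun c => G (i,c))).
    assert (Hgv : forall i, Dm i -> G (i, gv i)).
    { intros i Di. unfold gv. apply epsilon_spec. exact Di. }
    assert (Hall : forall j, Dm j).
    { intro j. apply NNPP; intro nDj.
      set (A' := fun c => A c \/ exists i, Dm i /\ gv i = c).
      assert (sA' : subset_small K A').
      { apply subset_small_union; auto.
        apply (@subset_small_img K I C (fun i c => Dm i /\ gv i = c)); auto.
        intros i c c' [_ E1] [_ E2]; congruence. }
      set (Sigma1 := fun th => exists l, (forall x, In x l -> Sigma x) /\ th = Theta j Dm gv (pconj j l)).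
      assert (ov1 : forall th, Sigma1 th -> over A' th).
      { intros th [l [Hl E]]. subst. apply Theta_over. apply over_pconj. intros; apply Hover; auto. }
      assert (fs1 : fin_sat Sigma1).
      { intros ls Hls.
        assert (Hcol : exists L0, (forall x, In x L0 -> Sigma x) /\
                  forall th, In th ls -> exists l, (forall x, In x l -> In x L0) /\ th = Theta j Dm gv (pconj j l)).
        { clear -Hls. induction ls as [|th ls IH].
          - exists nil; split; [intros x []|intros th []].
          - destruct (Hls th (or_introl eq_refl)) as [l [Hl E]].
            destruct (IH (fun t h => Hls t (or_intror h))) as [L0 [HL0 HL0']].
            exists (l ++ L0). split.
            + intros x Hx. apply in_app_or in Hx. destruct Hx; auto.
            + intros t [E'|E'].
              * subst. exists l; split; auto. intros; apply in_or_app; auto.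
              * destruct (HL0' t E') as [l' [Hl' E'']]. exists l'; split; auto.
                intros; apply in_or_app; auto. }
        destruct Hcol as [L0 [HL0 HL0']].
        set (ps := map (fun i => (i, gv i)) (filter (fun i => dec (Dm i)) (flat_map (@coords L C I) L0))).
        destruct (G2 L0 ps HL0) as [b0 [Hb0ps Hb0]].
        { intros p Hp. unfold ps in Hp. apply in_map_iff in Hp. destruct Hp as [i [E Hi]]. subst.
          apply filter_In in Hi. destruct Hi as [_ Hd]. apply (proj1 (decP _)) in Hd. auto. }
        set (b1 := fun i => if dec (Dm i) then gv i else b0 i).
        assert (Hb1 : forall x, In x L0 -> psat b1 x).
        { intros [phi s] Hx.
          enough (Hag : forall n i, fv phi n -> s n = inl i -> b0 i = b1 i)
            by exact (proj1 (psat_ext Hag) (Hb0 _ Hx)).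
          intros n i Hn Hs. unfold b1. destruct (classic (Dm i)) as [Di|nDi].
          - rewrite decT by auto. apply (Hb0ps (i, gv i)). unfold ps. apply in_map_iff. exists i; split; auto.
            apply filter_In. split; [|apply decT; auto]. apply in_flat_map. exists (phi, s); split; auto.
            eapply coords_In; eauto.
          - rewrite decF by auto. auto. }
        exists (fun _ => b1 j). intros th Hth. destruct (HL0' th Hth) as [l [Hl E]]. subst.
        apply (Theta_sem gv nDj). exists b1. split; [|split].
        - unfold b1; rewrite decF; auto.
        - intros i Di; unfold b1; rewrite decT; auto.
        - apply psat_pconj. intros; apply Hb1; auto. }
      destruct (Hsat A' sA' Sigma1 ov1 fs1) as [bb Hbb].
      set (c0 := bb tt).
      assert (Hbb' : forall th, Sigma1 th -> psat (fun _ : unit => c0) th).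
      { intros th Hth. replace (fun _ : unit => c0) with bb; auto.
        apply functional_extensionality; intros []; auto. }
      assert (HG' : forall p, (G p \/ p = (j, c0)) -> G p).
      { apply Gmax; [intros; left; auto|]. split.
        - intros i c c' [H1|H1] [H2|H2].
          + eapply G1; eauto.
          + injection H2; intros; subst. exfalso; apply nDj; exists c; auto.
          + injection H1; intros; subst. exfalso; apply nDj; exists c'; auto.
          + injection H1; injection H2; intros; subst; auto.
        - intros l ps Hl Hps.
          assert (S1 : Sigma1 (Theta j Dm gv (pconj j l))) by (exists l; auto).
          apply Hbb' in S1. apply (Theta_sem gv nDj) in S1.
          destruct S1 as [b [Hbj [HbD Hbl]]]. exists b. split.
          + intros [i c] Hp. simpl. destruct (Hps _ Hp) as [Gp|Ep].
            * assert (Di : Dm i) by (exists c; auto). rewrite HbD by auto.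
              eapply G1; [apply Hgv; auto|exact Gp].
            * injection Ep; intros; subst; auto.
          + intros y Hy; exact (proj1 (psat_pconj j l b) Hbl y Hy). }
      apply nDj. exists c0. apply HG'. right; auto. }
    exists gv. intros x Hx.
    destruct (G2 (x :: nil) (map (fun i => (i, gv i)) (coords x))) as [b0 [Hb0ps Hb0]].
    + intros y [E|[]]; subst; auto.
    + intros p Hp. apply in_map_iff in Hp. destruct Hp as [i [E _]]. subst. apply Hgv, Hall.
    + destruct x as [phi s].
      enough (Hag : forall n i, fv phi n -> s n = inl i -> b0 i = gv i)
        by exact (proj1 (psat_ext Hag) (Hb0 _ (or_introl eq_refl))).
      intros n i Hn Hs. apply (Hb0ps (i, gv i)). apply in_map_iff. exists i; split; auto. eapply coords_In; eauto.
Qed.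

Set Implicit Arguments.
Unset Strict Implicit.

Section Aut.
Variables (L : language) (C : structure L).

Lemma aut_iso g : automorphism C g -> iso g.
Proof. auto. Qed.

Lemma aut_of_inv g h : automorphism C g -> (forall x, h (g x) = x) -> (forall x, g (h x) = x) ->
  automorphism C h.
Proof.
  intros [Hi [Hs [Hf Hr]]] hg gh. split; [|split; [|split]].
  - intros a b E. rewrite <- (gh a), <- (gh b), E; auto.
  - intros b. exists (g b); auto.
  - intros f args. apply Hi. rewrite gh, Hf. f_equal. apply functional_extensionality; intro; rewrite gh; auto.
  - intros r args. rewrite (Hr r (fun i => h (args i))).
    replace (fun i => g (h (args i))) with args; [tauto|]. apply functional_extensionality; auto.
Qed.

Lemma aut_inv g : automorphism C g -> exists h, automorphism C h /\
  (forall x, h (g x) = x) /\ (forall x, g (h x) = x).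
Proof.
  intros Hg. pose proof Hg as [Hi [Hs _]].
  set (h := fun y => proj1_sig (constructive_indefinite_description _ (Hs y))).
  assert (gh : forall x, g (h x) = x).
  { intro x; unfold h; destruct (constructive_indefinite_description _ _); auto. }
  assert (hg : forall x, h (g x) = x) by (intro x; apply Hi; rewrite gh; auto).
  exists h; split; auto. eapply aut_of_inv; eauto.
Qed.

Lemma aut_comp g h : automorphism C g -> automorphism C h -> automorphism C (fun x => g (h x)).
Proof.
  intros [Hi [Hs [Hf Hr]]] [Hi' [Hs' [Hf' Hr']]]. split; [|split; [|split]].
  - intros a b E; auto.
  - intros b. destruct (Hs b) as [a Ea]. destruct (Hs' a) as [a' Ea']. exists a'; congruence.
  - intros f args. rewrite Hf', Hf. auto.
  - intros r args. rewrite (Hr' r args), (Hr r). tauto.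
Qed.

Definition mapS I (g : C -> C) (s : nat -> I + C) : nat -> I + C :=
  fun n => match s n with inl i => inl i | inr c => inr (g c) end.

Lemma aut_psat I g (Hg : automorphism C g) (b : I -> C) phi s :
  psat (fun i => g (b i)) (phi, mapS g s) <-> psat b (phi, s).
Proof.
  unfold psat; simpl. rewrite <- (iso_sat Hg phi (valuation b s)).
  apply sat_ext. intros n _. unfold valuation, mapS. destruct (s n); auto.
Qed.

Lemma equiv_over_aut I (M : C -> Prop) (a b : I -> C) g h :
  automorphism C g -> (forall x, h (g x) = x) -> (forall x, g (h x) = x) ->
  equiv_over M a b -> equiv_over (fun c => M (h c)) (fun i => g (a i)) (fun i => g (b i)).
Proof.
  intros Hg hg gh He [phi s] Hov.
  set (s0 := mapS h s).
  assert (Es : mapS g s0 = s).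
  { apply functional_extensionality; intro n. unfold s0, mapS. destruct (s n); auto. rewrite gh; auto. }
  assert (Hov0 : over M (phi, s0)).
  { intros n c Hn Hs. unfold s0, mapS in Hs. simpl in Hs. destruct (s n) eqn:E; [discriminate|].
    injection Hs; intro Ec; subst c. exact (Hov n c0 Hn E). }
  rewrite <- Es. rewrite !aut_psat by auto. apply He; auto.
Qed.

Lemma equiv_over_sym I (M : C -> Prop) (a b : I -> C) : equiv_over M a b -> equiv_over M b a.
Proof. intros H x Hx. split; intro; apply (H x Hx); auto. Qed.

Lemma small_model_aut K (M : C -> Prop) h : automorphism C h -> small_model K M ->
  small_model K (fun c => M (h c)).
Proof.
  intros Hh [sM [[x0 Mx0] [HM Hel]]]. pose proof Hh as [Hi [Hs [Hf Hr]]].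
  split.
  - unfold subset_small in *. apply (small_inj (Y := {x | M x})); auto.
    exists (fun p : {c | M (h c)} => exist _ (h (proj1_sig p)) (proj2_sig p)).
    intros [a Ha] [b Hb] E. injection E; intro E'. apply Hi in E'. subst. f_equal; apply proof_irrelevance.
  - split.
    + destruct (Hs x0) as [x Ex]. exists x. rewrite Ex; auto.
    + assert (HM' : fclosed (fun c => M (h c))).
      { intros f args Hargs. rewrite Hf. apply HM. auto. }
      exists HM'. intros phi v.
      set (F := fun p : substr HM' => (exist _ (h (proj1_sig p)) (proj2_sig p) : substr HM)).
      assert (HF : iso F).
      { split; [|split; [|split]].
        - intros [a Ha] [b Hb] E. unfold F in E; simpl in E. injection E; intro E'. apply Hi in E'.
          subst. f_equal; apply proof_irrelevance.
        - intros [d Hd]. destruct (Hs d) as [c Ec]. subst.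
          exists (exist _ c Hd : substr HM'). unfold F; simpl. reflexivity.
        - intros f args. unfold F; simpl. apply eq_sig_hprop; [intros; apply proof_irrelevance|]. simpl.
          apply Hf.
        - intros r args. simpl. apply Hr. }
      rewrite <- (iso_sat HF phi v). rewrite Hel. simpl.
      apply (iso_sat Hh phi (fun n => proj1_sig (v n))).
Qed.

Lemma chain_ext K I m (x y x' y' : I -> C) :
  lascar_chain K m x y -> (forall i, x i = x' i) -> (forall i, y i = y' i) -> lascar_chain K m x' y'.
Proof.
  intros H E1 E2. replace x' with x by (apply functional_extensionality; auto).
  replace y' with y by (apply functional_extensionality; auto). auto.
Qed.

Lemma chain_aut K I m (x y : I -> C) g : automorphism C g ->
  lascar_chain K m x y -> lascar_chain K m (fun i => g (x i)) (fun i => g (y i)).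
Proof.
  intros Hg [a [Ms [E0 [Em Hk]]]].
  destruct (aut_inv Hg) as [h [Hh [hg gh]]].
  exists (fun k i => g (a k i)), (fun k c => Ms k (h c)).
  split; [rewrite E0; auto|split; [rewrite Em; auto|]].
  intros k Hk'. destruct (Hk k Hk') as [sm eo]. split.
  - apply small_model_aut; auto.
  - apply equiv_over_aut; auto.
Qed.

Lemma chain_app K I m1 m2 (x y z : I -> C) :
  lascar_chain K m1 x y -> lascar_chain K m2 y z -> lascar_chain K (m1 + m2) x z.
Proof.
  intros [a1 [M1 [A0 [Am H1]]]] [a2 [M2 [B0 [Bm H2]]]].
  exists (fun k => if k <=? m1 then a1 k else a2 (k - m1)),
         (fun k => if k <? m1 then M1 k else M2 (k - m1)).
  split; [simpl; auto|split].
  - destruct (Nat.leb_spec (m1 + m2) m1).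
    + assert (m2 = 0) by lia. subst. rewrite Nat.add_0_r. congruence.
    + replace (m1 + m2 - m1) with m2 by lia. auto.
  - intros k Hk. destruct (Nat.ltb_spec k m1).
    + rewrite (proj2 (Nat.leb_le k m1)) by lia. rewrite (proj2 (Nat.leb_le (S k) m1)) by lia. auto.
    + destruct (Nat.leb_spec k m1).
      * assert (k = m1) by lia. subst k.
        rewrite (proj2 (Nat.leb_gt (S m1) m1)) by lia. rewrite Am, <- B0.
        replace (S m1 - m1) with 1 by lia. replace (m1 - m1) with 0 by lia.
        apply H2; lia.
      * rewrite (proj2 (Nat.leb_gt (S k) m1)) by lia.
        replace (S k - m1) with (S (k - m1)) by lia. apply H2; lia.
Qed.

Lemma chain_one K I (N : C -> Prop) (x y : I -> C) :
  small_model K N -> equiv_over N x y -> lascar_chain K 1 x y.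
Proof.
  intros HN He. exists (fun k => if k =? 0 then x else y), (fun _ => N).
  split; [auto|split; [auto|]]. intros k Hk. assert (k = 0) by lia. subst. simpl. auto.
Qed.

Lemma chain_zero K I (x : I -> C) : lascar_chain K 0 x x.
Proof. exists (fun _ => x), (fun _ => fun _ => False). split; auto. split; auto. intros; lia. Qed.

Lemma hom_over K (Hhom : strongly_homogeneous K C) (HKn : inj nat K) I (HI : small K I)
  (N : C -> Prop) (HN : subset_small K N) (x y : I -> C) :
  equiv_over N x y -> exists g, automorphism C g /\ (forall c, N c -> g c = c) /\ (forall i, g (x i) = y i).
Proof.
  intros He.
  set (J := ({c | N c} + I)%type).
  set (xx := fun j : J => match j with inl c => proj1_sig c | inr i => x i end).
  set (yy := fun j : J => match j with inl c => proj1_sig c | inr i => y i end).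
  assert (sJ : small K J) by (apply small_sum; auto).
  assert (Heq : equiv_over (fun _ => False) xx yy).
  { intros [phi s] Hov.
    set (s1 := fun n => match s n with inl (inl c) => inr (proj1_sig c) | inl (inr i) => inl i | inr c => inr c end).
    assert (Hov1 : over N (phi, s1)).
    { intros n c Hn Hs. unfold s1 in Hs; simpl in Hs. destruct (s n) as [[c'|i]|c'] eqn:E.
      - injection Hs; intro; subst. exact (proj2_sig c').
      - discriminate.
      - exfalso. exact (Hov n c' Hn E). }
    assert (E1 : psat xx (phi, s) <-> psat x (phi, s1)).
    { unfold psat; simpl. apply sat_ext. intros n _. unfold valuation, s1. destruct (s n) as [[c|i]|c]; auto. }
    assert (E2 : psat yy (phi, s) <-> psat y (phi, s1)).
    { unfold psat; simpl. apply sat_ext. intros n _. unfold valuation, s1. destruct (s n) as [[c|i]|c]; auto. }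
    rewrite E1, E2. apply He; auto. }
  destruct (Hhom J sJ xx yy Heq) as [g [Hg Hgj]].
  exists g. split; auto. split.
  - intros c Nc. exact (Hgj (inl (exist _ c Nc))).
  - intro i. exact (Hgj (inr i)).
Qed.

End Aut.

Set Implicit Arguments.
Unset Strict Implicit.

Unset Implicit Arguments.
Set Strict Implicit.

Theorem lemma5p9 (L : language) (K : Type) (C : structure L)
  (HK : kappa_large L K)
  (Hsat : kappa_saturated K C) (Hhom : strongly_homogeneous K C)
  (I : Type) (HI : small K I)
  (p q : pformula I C -> Prop)
  (Hp : complete_type (fun _ => False) p)
  (Hq : complete_type (fun _ => True) q)
  (Hpq : forall x, p x -> q x)
  (M : C -> Prop) (HM : small_model K M)
  (alpha : I -> C) (Halpha : realizes alpha (restrict q M)) :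
  (forall b1 b2 b3 b4 g3 g4 : C -> C,
     Aset q alpha b1 -> Aset q alpha b2 -> Aset q alpha b3 -> Aset q alpha b4 ->
     (forall x, g3 (b3 x) = x) -> (forall x, b3 (g3 x) = x) ->
     (forall x, g4 (b4 x) = x) -> (forall x, b4 (g4 x) = x) ->
     dL_le K alpha (fun i => b1 (b2 (g3 (g4 (alpha i))))) 4)
  /\
  (forall beta : I -> C, dL_le K alpha beta 4 -> EL K alpha beta).
Proof.
  destruct HK as [[e He] _]. assert (HKn : inj nat K) by (exists e; auto).
  pose proof HM as [sM _].
  assert (realize_equiv : forall (A : C -> Prop) (a b : I -> C),
    realizes a (restrict q A) -> realizes b (restrict q A) -> equiv_over A a b).
  { intros A a b Ha Hb [phi s] Hov. destruct Hq as [_ [_ Hcq]].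
    destruct (Hcq phi s (fun _ _ _ _ => Logic.I)) as [H|H].
    - split; intros _; [apply Hb|apply Ha]; split; auto.
    - assert (Hov' : over A (fneg phi, s)) by exact Hov.
      pose proof (Ha _ (conj H Hov')) as Ha'. pose proof (Hb _ (conj H Hov')) as Hb'.
      unfold psat in *; simpl in *. tauto. }
  assert (rmono : forall (A A' : C -> Prop) (b : I -> C), (forall c, A' c -> A c) ->
     realizes b (restrict q A) -> realizes b (restrict q A')).
  { intros A A' b HA Hb x [qx ox]. apply Hb. split; auto. intros n c Hn Hs. apply HA. exact (ox n c Hn Hs). }
  set (A0 := fun c => M c \/ range alpha c).
  assert (sA0 : subset_small K A0) by (apply subset_small_union; auto; apply subset_small_range; auto).
  destruct (realize_type HKn Hsat HI sA0 (Sigma := restrict q A0)) as [beta Hbeta].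
  { intros x [_ Hx]; auto. }
  { intros l Hl. destruct Hq as [_ [Hfs _]]. apply Hfs. intros x Hx; apply Hl; auto. }
  assert (sF : subset_small K (fun _ : C => False)).
  { intros [f _]. destruct (f (e 0)) as [_ []]. }
  destruct (@hom_over L C K Hhom HKn I HI (fun _ => False) sF alpha beta) as [s0 [Hs0 [_ Hs0a]]].
  { apply realize_equiv.
    - apply (rmono M); [intros _ []|auto].
    - apply (rmono A0); [intros _ []|auto]. }
  destruct (aut_inv Hs0) as [s0i [Hs0i [s0is0 s0s0i]]].
  assert (d1 : equiv_over M alpha (fun i => s0 (alpha i))).
  { replace (fun i => s0 (alpha i)) with beta by (apply functional_extensionality; intro; auto).
    apply realize_equiv; auto. apply (rmono A0); auto. intros c Hc; left; auto. }
  assert (ch1 : lascar_chain K 1 alpha (fun i => s0 (alpha i))) by (eapply chain_one; eauto).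
  assert (ch1' : lascar_chain K 1 (fun i => s0 (alpha i)) alpha)
    by (eapply chain_one; eauto; apply equiv_over_sym; auto).
  assert (HB : forall t, Aset q alpha t -> exists f, automorphism C f /\ (forall i, f (alpha i) = alpha i)
                 /\ (forall i, f (s0 (alpha i)) = t (alpha i))).
  { intros t [Ht Hta].
    destruct (@hom_over L C K Hhom HKn I HI (range alpha) (subset_small_range (f:=alpha) HI)
                (fun i => s0 (alpha i)) (fun i => t (alpha i))) as [f [Hf [Hfa Hft]]].
    - apply realize_equiv; auto.
      replace (fun i => s0 (alpha i)) with beta by (apply functional_extensionality; intro; auto).
      apply (rmono A0); auto. intros c Hc; right; auto.
    - exists f; split; auto. split; auto. intro i; apply Hfa; exists i; auto. }
  assert (StepA : forall t, Aset q alpha t -> forall (y : I -> C) n,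
             dL_le K alpha y n -> dL_le K alpha (fun i => t (y i)) (S n)).
  { intros t Ht y n [m [Hmn Hc]].
    destruct (HB t Ht) as [f [Hf [Hfa Hfs]]].
    destruct (aut_inv Hf) as [fi [Hfi [fif ffi]]].
    assert (Hf' : automorphism C (fun x => s0i (fi (t x)))).
    { apply aut_comp; auto. apply aut_comp; auto. apply Ht. }
    pose proof (chain_aut Hf' Hc) as c1.
    assert (c1' : lascar_chain K m alpha (fun i => s0i (fi (t (y i))))).
    { eapply chain_ext; [exact c1| |]; intro i; simpl; auto.
      rewrite <- Hfs, fif, s0is0; auto. }
    pose proof (chain_app ch1 (chain_aut Hs0 c1')) as c3.
    pose proof (chain_aut Hf c3) as c4.
    exists (1 + m); split; [lia|].
    eapply chain_ext; [exact c4| |]; intro i; simpl; auto.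
    rewrite s0s0i, ffi; auto. }
  assert (StepB : forall t g, Aset q alpha t -> (forall x, g (t x) = x) -> (forall x, t (g x) = x) ->
             forall (y : I -> C) n, dL_le K alpha y n -> dL_le K alpha (fun i => g (y i)) (S n)).
  { intros t g Ht gt tg y n [m [Hmn Hc]].
    destruct (HB t Ht) as [f [Hf [Hfa Hfs]]].
    destruct (aut_inv Hf) as [fi [Hfi [fif ffi]]].
    assert (Hg : automorphism C g) by (eapply aut_of_inv; [apply Ht|auto|auto]).
    pose proof (chain_aut Hfi Hc) as c1.
    assert (c1' : lascar_chain K m alpha (fun i => fi (y i))).
    { eapply chain_ext; [exact c1| |]; intro i; simpl; auto.
      rewrite <- (Hfa i) at 1. rewrite fif; auto. }
    pose proof (chain_aut Hs0i (chain_app ch1' c1')) as c3.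
    assert (Hf'' : automorphism C (fun x => g (f (s0 x)))).
    { apply aut_comp; auto. apply aut_comp; auto. }
    pose proof (chain_aut Hf'' c3) as c4.
    exists (1 + m); split; [lia|].
    eapply chain_ext; [exact c4| |]; intro i; simpl.
    - rewrite s0is0, Hfs, gt; auto.
    - rewrite s0s0i, ffi; auto. }
  split.
  - intros b1 b2 b3 b4 g3 g4 B1 B2 B3 B4 g3b3 b3g3 g4b4 b4g4.
    assert (d0 : dL_le K alpha alpha 0) by (exists 0; split; auto; apply chain_zero).
    apply (StepA b1 B1 (fun i => b2 (g3 (g4 (alpha i)))) 3).
    apply (StepA b2 B2 (fun i => g3 (g4 (alpha i))) 2).
    apply (StepB b3 g3 B3 g3b3 b3g3 (fun i => g4 (alpha i)) 1).
    apply (StepB b4 g4 B4 g4b4 b4g4 alpha 0). exact d0.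
  - intros beta0 [m [Hm [a [Ms [Ea0 [Eam Hk]]]]]].
    assert (Hind : forall k, k <= m -> exists g, autfL K g /\ forall i, g (alpha i) = a k i).
    { induction k; intro Hkm.
      - exists (fun x => x). split; [apply autfL_id|]. rewrite Ea0; auto.
      - destruct IHk as [g [Hg Hga]]; [lia|].
        destruct (Hk k) as [[sMk elMk] eqk]; [lia|].
        destruct (@hom_over L C K Hhom HKn I HI (Ms k) sMk (a k) (a (S k)) eqk) as [gk [Hgk [Hgkfix Hgka]]].
        exists (fun x => gk (g x)). split.
        + apply autfL_comp; auto. apply autfL_gen. split; auto. exists (Ms k); split; [split; auto|auto].
        + intro i. rewrite Hga; auto. }
    destruct (Hind m (le_n m)) as [g [Hg Hga]].
    exists g; split; auto. intro i; rewrite Hga, Eam; auto.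
Qed.
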